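(* Let $(\alpha_k)_{k\ge1}$ be a uniformly bounded sequence of positive reals, $\gamma_k:=\sum_{j=1}^k\frac1{\alpha_j}$ ($\gamma_0:=0$), let $\kappa>0$ and $\tau>0$ be constants, and for $\delta\ge0$, $k\ge1$ define $$e_k^n:=\delta^2\sum_{i=1}^k\Big(\frac{1}{\alpha_i^2}+\gamma_{i-1}^2\Big),\qquad e_k^r:=1+\sum_{i=1}^k\alpha_i^{-1}\gamma_i^{-\kappa}.$$ Define $k(\delta):=0$ if $e_1^n>\tau e_1^r$, and otherwise $k(\delta):=\max\{k\in\mathbb{N}:\ e_i^n\le\tau e_i^r\ \text{for all } i\le k\}$. Then for every $\delta>0$, $k(\delta)$ is well-defined and unique (in particular the maximum exists and is finite), and $k(\delta)\to\infty$ as $\delta\to0$.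
   Context: In the paper $\kappa$ is the exponent from an active set condition on a solution of the underlying optimization problem; for this statement only $\kappa>0$ matters. $\mathbb{N}=\{1,2,\dots\}$. *)

(* Defs.v *)
From Stdlib Require Import Reals Lra Lia.
Open Scope R_scope.

Fixpoint sum1 (f : nat -> R) (k : nat) : R :=
  match k with
  | O => 0
  | S k' => sum1 f k' + f (S k')
  end.

Definition gam (alpha : nat -> R) (k : nat) : R := sum1 (fun j => / alpha j) k.

Definition en (alpha : nat -> R) (delta : R) (k : nat) : R :=
  delta ^ 2 * sum1 (fun i => / (alpha i ^ 2) + (gam alpha (i - 1)) ^ 2) k.

Definition er (alpha : nat -> R) (kappa : R) (k : nat) : R :=
  1 + sum1 (fun i => / alpha i * Rpower (gam alpha i) (- kappa)) k.

Definition good (alpha : nat -> R) (kappa tau delta : R) (k : nat) : Prop :=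
  (1 <= k)%nat /\
  forall i : nat, (1 <= i <= k)%nat -> en alpha delta i <= tau * er alpha kappa i.

Definition is_kdelta (alpha : nat -> R) (kappa tau delta : R) (k : nat) : Prop :=
  (en alpha delta 1 > tau * er alpha kappa 1 /\ k = 0%nat)
  \/ (en alpha delta 1 <= tau * er alpha kappa 1 /\
      good alpha kappa tau delta k /\
      forall k' : nat, good alpha kappa tau delta k' -> (k' <= k)%nat).

(* Main.v *)
Require Import Defs.
From Stdlib Require Import Reals Lra Lia Classical Wf_nat Compare_dec Arith.
Open Scope R_scope.

Lemma sum1_nonneg (f : nat -> R) k :
  (forall i, (1 <= i)%nat -> 0 <= f i) -> 0 <= sum1 f k.
Proof. intros H; induction k; simpl; [lra|]. specialize (H (S k)); assert (0 <= f (S k)) by (apply H; lia). lra. Qed.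

Lemma sum1_mono (f : nat -> R) i j :
  (forall i, (1 <= i)%nat -> 0 <= f i) -> (i <= j)%nat -> sum1 f i <= sum1 f j.
Proof.
  intros H Hij; induction Hij; [lra|]. simpl.
  assert (0 <= f (S m)) by (apply H; lia). lra.
Qed.

Lemma least_ex (P : nat -> Prop) : (exists n, P n) -> exists n, P n /\ forall m, P m -> (n <= m)%nat.
Proof.
  intros [n Hn]. revert Hn. induction n as [n IH] using (well_founded_induction lt_wf).
  intros Hn. destruct (classic (exists m, (m < n)%nat /\ P m)) as [[m [Hm Pm]]|Hno].
  - exact (IH m Hm Pm).
  - exists n; split; auto. intros m Pm. destruct (le_lt_dec n m); auto.
    exfalso; apply Hno; eauto.
Qed.

Theorem mainTheorem2 (alpha : nat -> R) (kappa tau : R)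
  (Hpos : forall k : nat, (1 <= k)%nat -> 0 < alpha k)
  (Hbnd : exists M : R, forall k : nat, (1 <= k)%nat -> alpha k <= M)
  (Hkappa : 0 < kappa) (Htau : 0 < tau) :
  (forall delta : R, 0 < delta -> exists! k : nat, is_kdelta alpha kappa tau delta k)
  /\
  (forall N : nat, exists d0 : R, 0 < d0 /\
     forall delta : R, 0 < delta < d0 ->
       forall k : nat, is_kdelta alpha kappa tau delta k -> (N <= k)%nat).
Proof.
  destruct Hbnd as [M HM].
  assert (HM0 : 0 < M) by (pose proof (HM 1%nat (le_n 1)); pose proof (Hpos 1%nat (le_n 1)); lra).
  assert (Ha : forall i, (1 <= i)%nat -> 0 < / alpha i) by (intros; apply Rinv_0_lt_compat; auto).
  assert (HaM : forall i, (1 <= i)%nat -> / M <= / alpha i)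
    by (intros; apply Rinv_le_contravar; auto).
  assert (Hgk : forall k, INR k / M <= gam alpha k).
  { induction k; unfold gam in *; simpl sum1. { simpl; lra. }
    rewrite S_INR. specialize (HaM (S k)). assert (/ M <= / alpha (S k)) by (apply HaM; lia).
    unfold Rdiv in *. lra. }
  assert (Hgmono : forall i j, (i <= j)%nat -> gam alpha i <= gam alpha j).
  { intros; apply sum1_mono; auto. intros; left; auto. }
  assert (Hg1 : 0 < gam alpha 1) by (unfold gam; simpl; pose proof (Ha 1%nat (le_n 1)); lra).
  assert (Hfn : forall i, (1 <= i)%nat -> 0 <= / (alpha i ^ 2) + gam alpha (i - 1) ^ 2).
  { intros. pose proof (Hpos i H). assert (0 < alpha i ^ 2) by (apply pow_lt; auto).
    assert (0 < / alpha i ^ 2) by (apply Rinv_0_lt_compat; auto). nra. }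
  assert (Hfr : forall i, (1 <= i)%nat -> 0 <= / alpha i * Rpower (gam alpha i) (- kappa)).
  { intros. pose proof (Ha i H). unfold Rpower. pose proof (exp_pos (- kappa * ln (gam alpha i))). nra. }
  assert (Her1 : forall k, 1 <= er alpha kappa k).
  { intros; unfold er. pose proof (sum1_nonneg _ k Hfr). lra. }
  set (c := Rpower (gam alpha 1) (- kappa)).
  assert (Hc : 0 < c) by (unfold c, Rpower; apply exp_pos).
  assert (Herup : forall k, er alpha kappa k <= 1 + c * gam alpha k).
  { intros k; unfold er, gam; induction k; simpl sum1; [lra|].
    fold (gam alpha (S k)).
    assert (Hle : Rpower (gam alpha (S k)) (- kappa) <= c).
    { unfold c. rewrite !Rpower_Ropp. apply Rinv_le_contravar.
      { unfold Rpower; apply exp_pos. }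
      apply Rle_Rpower_l; [lra|]. split; auto. apply Hgmono; lia. }
    pose proof (Ha (S k) ltac:(lia)). fold (gam alpha k) in IHk.
    assert (/ alpha (S k) * Rpower (gam alpha (S k)) (- kappa) <= / alpha (S k) * c)
      by (apply Rmult_le_compat_l; lra).
    assert (Hgs : gam alpha (S k) = gam alpha k + / alpha (S k)) by reflexivity.
    rewrite Hgs in H0. unfold gam in *. rewrite Rmult_plus_distr_l. lra. }
  assert (Henlow : forall delta k, (1 <= k)%nat -> delta ^ 2 * gam alpha k ^ 2 / 2 <= en alpha delta k).
  { intros delta k Hk. destruct k as [|k]; [lia|]. unfold en. cbn [sum1].
    pose proof (sum1_nonneg _ k Hfn).
    replace (S k - 1)%nat with k by lia.
    assert (Hg : gam alpha (S k) = gam alpha k + / alpha (S k)) by reflexivity.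
    assert (Hinv : / (alpha (S k) ^ 2) = (/ alpha (S k)) ^ 2).
    { rewrite pow_inv; reflexivity. }
    rewrite Hinv, Hg.
    set (x := gam alpha k) in *. set (y := / alpha (S k)).
    set (S0 := sum1 _ k) in *.
    assert (0 <= delta ^ 2) by (apply pow2_ge_0).
    assert ((x + y) ^ 2 / 2 <= S0 + (y ^ 2 + x ^ 2)) by (pose proof (pow2_ge_0 (x - y)); nra).
    assert (delta ^ 2 * ((x + y) ^ 2 / 2) <= delta ^ 2 * (S0 + (y ^ 2 + x ^ 2)))
      by (apply Rmult_le_compat_l; auto).
    lra. }
  split.
  - intros delta Hd.
    assert (Hbad : exists m, (1 <= m)%nat /\ en alpha delta m > tau * er alpha kappa m).
    { set (X := 2 * tau * (1 + c) / delta ^ 2 + 1).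
      destruct (INR_unbounded (X * M)) as [n Hn].
      exists (S n). split; [lia|].
      assert (HgX : X <= gam alpha (S n)).
      { pose proof (Hgk (S n)). rewrite S_INR in H.
        assert (X <= INR n / M).
        { apply (Rmult_le_reg_r M); auto. unfold Rdiv; rewrite Rmult_assoc, Rinv_l by lra. lra. }
        unfold Rdiv in *. rewrite Rmult_plus_distr_r, Rmult_1_l in H. pose proof (Rinv_0_lt_compat M HM0). lra. }
      pose proof (Henlow delta (S n) ltac:(lia)). pose proof (Herup (S n)).
      assert (Hd2 : 0 < delta ^ 2) by (apply pow_lt; auto).
      assert (HX : delta ^ 2 * X = 2 * tau * (1 + c) + delta ^ 2).
      { unfold X. field. lra. }
      set (g := gam alpha (S n)) in *.
      assert (1 <= X) by (unfold X; assert (0 <= 2 * tau * (1+c) / delta ^ 2) by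
        (apply Rmult_le_pos; [nra| left; apply Rinv_0_lt_compat; auto]); lra).
      assert (delta ^ 2 * g * X <= delta ^ 2 * g * g) by (apply Rmult_le_compat_l; nra).
      nra. }
    destruct (classic (en alpha delta 1 > tau * er alpha kappa 1)) as [H1|H1].
    + exists 0%nat. split. { left; auto. }
      intros k' [[_ ->]|[H2 _]]; auto. lra.
    + apply Rnot_gt_le in H1.
      destruct (least_ex (fun m => (1 <= m)%nat /\ en alpha delta m > tau * er alpha kappa m) Hbad)
        as [m [[Hm1 Hmb] Hmin]].
      assert (Hm2 : (2 <= m)%nat).
      { destruct (Nat.eq_dec m 1); [subst; lra | lia]. }
      assert (Hgood : good alpha kappa tau delta (m - 1)).
      { split; [lia|]. intros i Hi. apply Rnot_gt_le. intro Hc'.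
        specialize (Hmin i (conj (proj1 Hi) Hc')). lia. }
      assert (Hmax : forall k', good alpha kappa tau delta k' -> (k' <= m - 1)%nat).
      { intros k' [Hk1 Hk]. destruct (le_lt_dec k' (m-1)); auto.
        specialize (Hk m ltac:(lia)). lra. }
      exists (m - 1)%nat. split. { right; auto. }
      intros k' [[H2 _]|[_ [Hg' Hm']]]. { lra. }
      apply Nat.le_antisymm; auto.
  - intros N.
    set (SN := sum1 (fun i => / (alpha i ^ 2) + (gam alpha (i - 1)) ^ 2) N).
    assert (HSN : 0 <= SN) by (apply sum1_nonneg; auto).
    exists (Rmin 1 (tau / (SN + 1))). split.
    { apply Rmin_glb_lt; [lra|]. apply Rdiv_lt_0_compat; lra. }
    intros delta [Hd Hdlt] k Hk.
    assert (Hd1 : delta < 1) by (eapply Rlt_le_trans; [exact Hdlt| apply Rmin_l]).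
    assert (Hdt : delta < tau / (SN + 1)) by (eapply Rlt_le_trans; [exact Hdlt| apply Rmin_r]).
    assert (Hdt' : delta * (SN + 1) < tau).
    { apply (Rmult_lt_compat_r (SN + 1)) in Hdt; [|lra].
      unfold Rdiv in Hdt; rewrite Rmult_assoc, Rinv_l in Hdt by lra. lra. }
    assert (Hok : forall i, (i <= N)%nat -> en alpha delta i <= tau * er alpha kappa i).
    { intros i Hi. unfold en.
      assert (sum1 (fun i => / (alpha i ^ 2) + (gam alpha (i - 1)) ^ 2) i <= SN)
        by (apply sum1_mono; auto).
      pose proof (sum1_nonneg _ i Hfn).
      pose proof (Her1 i).
      assert (delta ^ 2 <= delta) by (simpl; nra).
      assert (delta ^ 2 * sum1 (fun i => / (alpha i ^ 2) + (gam alpha (i - 1)) ^ 2) i <= delta * SN).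
      { apply Rmult_le_compat; auto. apply pow2_ge_0. }
      nra. }
    destruct N as [|N]; [lia|].
    destruct Hk as [[H1 _]|[_ [_ Hmax]]].
    + pose proof (Hok 1%nat ltac:(lia)). lra.
    + apply Hmax. split; [lia|]. intros i Hi. apply Hok; lia.
Qed.
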